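(* Let $\ell=\ell(n)$ be positive integers with $\ell\mid n$ and $\ell=o(n)$. Let $T^*$ be the minimum, over all fitness-dependent mutation rate sequences $(p_0,\dots,p_{n/\ell-1})\in(0,1)^{n/\ell}$, of the expected runtime of the (1+1) EA on $\mathrm{BLO}_\ell$. Then, as $n\to\infty$, \[ T^*=(1+o(1))\,\frac{e}{2}\cdot\frac{b2^\ell}{\ell}\,n^2. \]
   Context: For $\ell\ge1$ let $s(\ell)=\sum_{j=1}^\ell\binom{\ell}{j}\frac1j$ and $b=s(\ell)/2^{\ell+1}$. For $x\in\{0,1\}^n$ with $\ell\mid n$, $\mathrm{BLO}_\ell(x)=\sum_{m=1}^{n/\ell}\prod_{i=1}^{m\ell}x_i$. The (1+1) EA with fitness-dependent rates $(p_m)$: $x_0$ uniform on $\{0,1\}^n$; in each iteration an offspring $y$ is created from the current $x$ by flipping each bit independently with probability $p_{\mathrm{BLO}_\ell(x)}$, and $y$ replaces $x$ iff $\mathrm{BLO}_\ell(y)\ge\mathrm{BLO}_\ell(x)$. The runtime is the number of iterations until the current individual first has fitness $n/\ell$ (zero if $x_0$ already does); its expectation is $\sum_{m=0}^{n/\ell-1}(1-p_m)^{-m\ell}\sum_{j=1}^{\ell}\binom{\ell}{j}\frac{1}{1-(1-2p_m)^j}$. *)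

(* Defs.v *)
From HB Require Import structures.
From mathcomp Require Import all_boot all_order all_algebra.
From mathcomp Require Import all_classical all_reals all_analysis.
Set Implicit Arguments. Unset Strict Implicit. Unset Printing Implicit Defensive.
Import Order.TTheory GRing.Theory Num.Theory.
Local Open Scope ring_scope.
Local Open Scope classical_set_scope.

Section BLO.
Variable R : realType.

Definition s_coef (l : nat) : R := \sum_(1 <= j < l.+1) 'C(l, j)%:R / j%:R.

Definition b_coef (l : nat) : R := s_coef l / 2 ^+ l.+1.

(* Expected runtime of the (1+1) EA with fitness-dependent rates p_0..p_{n/l-1}
   on BLO_l (closed formula given in the paper's context):
   sum_{m=0}^{n/l-1} (1-p_m)^{-m l} sum_{j=1}^l C(l,j) / (1-(1-2p_m)^j). *)
Definition expected_runtime (n l : nat) (p : 'I_(n %/ l) -> R) : R :=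
  \sum_(m < n %/ l)
     ((1 - p m) ^+ (m * l))^-1 *
     \sum_(1 <= j < l.+1) 'C(l, j)%:R / (1 - (1 - 2 * p m) ^+ j).

Definition opt_runtime (n l : nat) : R :=
  inf [set t | exists p : 'I_(n %/ l) -> R,
                 (forall m, 0 < p m < 1) /\ t = expected_runtime p].

End BLO.

(* Main.v *)
Require Import Defs.
From HB Require Import structures.
From mathcomp Require Import all_boot all_order all_algebra.
From mathcomp Require Import all_classical all_reals all_analysis.
From mathcomp.algebra_tactics Require Import ring lra.
Import Order.TTheory GRing.Theory Num.Theory.
Import numFieldNormedType.Exports.
Local Open Scope classical_set_scope.
Local Open Scope ring_scope.

Section Aux.
Variable R : realType.

Lemma den_bounds (p : R) (j : nat) : 0 < p < 1 -> (0 < j)%N ->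
  0 < 1 - (1 - 2 * p) ^+ j <= 2 * p * j%:R.
Proof.
move=> /andP[p0 p1] j0.
set q := 1 - 2 * p.
have qn : `|q| < 1.
  rewrite ltr_norml; apply/andP; split; rewrite /q; lra.
have qj : q ^+ j < 1.
  apply: le_lt_trans (ler_norm _) _.
  by rewrite normrX expr_lt1 // normr_ge0.
apply/andP; split; first by rewrite subr_gt0.
have -> : 1 - q ^+ j = 2 * p * \sum_(i < j) q ^+ i.
  by rewrite -[1 - _]opprB subrX1 /q; ring.
rewrite ler_pM2l; last lra.
have -> : (j%:R : R) = \sum_(i < j) 1.
  by rewrite sumr_const card_ord.
apply: ler_sum => i _.
apply: le_trans (ler_norm _) _.
rewrite normrX; apply: exprn_ile1; [exact: normr_ge0 | exact: ltW].
Qed.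

Lemma den_inv_ub (p : R) (j : nat) : 0 < p -> p <= 1/2 -> (0 < j)%N ->
  (1 - (1 - 2 * p) ^+ j)^-1 <= (2 * p * j%:R)^-1 + 1.
Proof.
move=> p0 p1 j0.
set y := 2 * p * j%:R.
have y0 : 0 < y by rewrite /y mulr_gt0 // ?ltr0n //; lra.
have q1 : 0 <= 1 - 2 * p <= expR (- (2 * p)).
  apply/andP; split; first lra.
  by have := expR_ge1Dx (- (2 * p)); lra.
have qj : (1 - 2 * p) ^+ j <= (1 + y)^-1.
  apply: (@le_trans _ _ (expR (- (2 * p)) ^+ j)).
    case/andP: q1 => a b; apply: lerXn2r; rewrite ?nnegrE ?expR_ge0 //.
  rewrite -expRM_natr mulNr expRN lef_pV2 ?posrE ?expR_gt0 //; last lra.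
  exact: expR_ge1Dx.
have h : y / (1 + y) <= 1 - (1 - 2 * p) ^+ j.
  have -> : y / (1 + y) = 1 - (1 + y)^-1 by field; lra.
  lra.
have yy : 0 < y / (1 + y) by rewrite divr_gt0 //; lra.
apply: le_trans (_ : (y / (1 + y))^-1 <= _).
  by rewrite lef_pV2 ?posrE //; apply: lt_le_trans h.
rewrite invfM invrK le_eqVlt; apply/orP; left; apply/eqP; field; lra.
Qed.

Lemma s_ge0 (L : nat) : 0 <= s_coef R L.
Proof.
rewrite /s_coef; apply: sumr_ge0 => j _; exact: divr_ge0.
Qed.

Lemma term_lb (L k : nat) (p : R) : 0 < p < 1 ->
  expR 1 * k%:R * s_coef R L / 2 <=
  ((1 - p) ^+ k)^-1 * \sum_(1 <= j < L.+1) 'C(L, j)%:R / (1 - (1 - 2 * p) ^+ j).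
Proof.
move=> pp; have /andP[p0 p1] := pp.
have hs : s_coef R L / (2 * p) <=
    \sum_(1 <= j < L.+1) 'C(L, j)%:R / (1 - (1 - 2 * p) ^+ j).
  rewrite /s_coef mulr_suml; apply: ler_sum_nat => j /andP[j1 _].
  have /andP[d0 d1] := den_bounds p j pp j1.
  have -> : 'C(L, j)%:R / j%:R / (2 * p) = 'C(L, j)%:R / (2 * p * j%:R) :> R.
    by rewrite -mulrA -invfM [j%:R * _]mulrC.
  apply: ler_wpM2l; first exact: ler0n.
  by rewrite lef_pV2 ?posrE // (lt_le_trans d0 d1).
have he : expR (p * k%:R) <= ((1 - p) ^+ k)^-1.
  have q0 : 0 < (1 - p) ^+ k by apply: exprn_gt0; lra.
  have : (1 - p) ^+ k <= expR (- p) ^+ k.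
    apply: lerXn2r; rewrite ?nnegrE ?expR_ge0 //; first lra.
    by have := expR_ge1Dx (- p); lra.
  by rewrite -expRM_natr -lef_pV2 ?posrE ?expR_gt0 // mulNr expRN invrK.
have hk : expR 1 * (p * k%:R) <= expR (p * k%:R).
  have -> : p * k%:R = 1 + (p * k%:R - 1) by ring.
  rewrite expRD ler_wpM2l ?expR_ge0 //.
  by have := expR_ge1Dx (p * k%:R - 1); lra.
have S0 := s_ge0 L.
have h2 : expR (p * k%:R) * (s_coef R L / (2 * p)) <=
    ((1 - p) ^+ k)^-1 * \sum_(1 <= j < L.+1) 'C(L, j)%:R / (1 - (1 - 2 * p) ^+ j).
  apply: ler_pM => //; rewrite ?expR_ge0 //; apply: divr_ge0 => //; lra.
have h1 : expR 1 * k%:R * s_coef R L / 2 <= expR (p * k%:R) * (s_coef R L / (2 * p)).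
  have h3 : expR 1 * (p * k%:R) * (s_coef R L / (2 * p)) <=
            expR (p * k%:R) * (s_coef R L / (2 * p)).
    by apply: ler_wpM2r => //; apply: divr_ge0 => //; lra.
  have -> : expR 1 * k%:R * s_coef R L / 2 =
            expR 1 * (p * k%:R) * (s_coef R L / (2 * p)) by field; lra.
  exact: h3.
exact: le_trans h1 h2.
Qed.


Lemma term_ub (L k : nat) (p : R) : p = (k%:R + 2)^-1 ->
  ((1 - p) ^+ k)^-1 * \sum_(1 <= j < L.+1) 'C(L, j)%:R / (1 - (1 - 2 * p) ^+ j)
  <= expR 1 * (s_coef R L * ((k%:R + 2) / 2 + L%:R)).
Proof.
move=> hp.
have k0 : (0 : R) <= k%:R by exact: ler0n.
have p0 : 0 < p by rewrite hp invr_gt0; lra.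
have p1 : p <= 1/2.
  rewrite hp -[X in _ <= X]invf_div divr1 lef_pV2 ?posrE //; lra.
have S0 := s_ge0 L.
have hs : \sum_(1 <= j < L.+1) 'C(L, j)%:R / (1 - (1 - 2 * p) ^+ j)
    <= s_coef R L * ((k%:R + 2) / 2 + L%:R).
  rewrite /s_coef mulr_suml; apply: ler_sum_nat => j /andP[j1 jL].
  have jL' : (j%:R : R) <= L%:R by rewrite ler_nat -ltnS.
  have j0 : (0 : R) < j%:R by rewrite ltr0n.
  have hi := den_inv_ub p j p0 p1 j1.
  apply: (@le_trans _ _ ('C(L, j)%:R * ((2 * p * j%:R)^-1 + 1))).
    by apply: ler_wpM2l => //; exact: ler0n.
  have c0 : (0 : R) <= 'C(L, j)%:R by exact: ler0n.
  have e1 : 'C(L, j)%:R * ((2 * p * j%:R)^-1 + 1) =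
      'C(L, j)%:R / j%:R * ((k%:R + 2) / 2 + j%:R) :> R.
    rewrite hp; field; lra.
  rewrite e1; apply: ler_wpM2l; first exact: divr_ge0.
  lra.
have he : ((1 - p) ^+ k)^-1 <= expR 1.
  have hq : 1 - p = (k%:R + 1) / (k%:R + 2) by rewrite hp; field; lra.
  have h1 : (1 - p)^-1 <= expR ((k%:R + 1)^-1).
    have -> : (1 - p)^-1 = 1 + (k%:R + 1)^-1 by rewrite hq invf_div; field; lra.
    exact: expR_ge1Dx.
  rewrite -exprVn.
  apply: (@le_trans _ _ (expR ((k%:R + 1)^-1) ^+ k)).
    apply: lerXn2r; rewrite ?nnegrE ?expR_ge0 //.
    rewrite invr_ge0; lra.
  rewrite -expRM_natr ler_expR.
  rewrite mulrC ler_pdivrMr; last lra.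
  lra.
have hq0 : 0 <= ((1 - p) ^+ k)^-1.
  rewrite invr_ge0; apply: exprn_ge0; lra.
apply: ler_pM => //.
rewrite big_nat; apply: sumr_ge0 => j /andP[j1 _].
apply: divr_ge0; first exact: ler0n.
have pp : 0 < p < 1 by rewrite p0 /=; lra.
by have /andP[d0 _] := den_bounds p j pp j1; exact: ltW.
Qed.


Lemma s_gt0 (L : nat) : (0 < L)%N -> (L%:R : R) <= s_coef R L.
Proof.
move=> L0; rewrite /s_coef big_ltn // bin1 divr1 lerDl.
rewrite big_nat; apply: sumr_ge0 => j _; exact: divr_ge0.
Qed.

Lemma sum_id (N : nat) : (\sum_(m < N) (m%:R : R)) * 2 = N%:R * (N%:R - 1).
Proof.
elim: N => [|N IH]; first by rewrite big_ord0; ring.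
rewrite big_ord_recr /= mulrDl IH -natr1; ring.
Qed.

Lemma lower_all (n L : nat) (p : 'I_(n %/ L) -> R) : (forall m, 0 < p m < 1) ->
  expR 1 * s_coef R L * L%:R / 4 * ((n %/ L)%:R * ((n %/ L)%:R - 1))
  <= expected_runtime p.
Proof.
move=> hp; rewrite /expected_runtime -sum_id.
have -> : expR 1 * s_coef R L * L%:R / 4 * ((\sum_(m < n %/ L) (m%:R : R)) * 2)
   = \sum_(m < n %/ L) (expR 1 * (m * L)%:R * s_coef R L / 2).
  rewrite [_ * 2]mulrC mulrA mulr_sumr; apply: eq_bigr => m _; by rewrite natrM; field.
apply: ler_sum => m _; exact: term_lb.
Qed.

Lemma upper_one (n L : nat) :
  exists p : 'I_(n %/ L) -> R, (forall m, 0 < p m < 1) /\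
  expected_runtime p <= expR 1 * s_coef R L *
     (L%:R / 4 * ((n %/ L)%:R * ((n %/ L)%:R - 1)) + (n %/ L)%:R * (1 + L%:R)).
Proof.
exists (fun m => ((m * L)%:R + 2)^-1); split.
  move=> m; have k0 : (0 : R) <= (m * L)%:R by exact: ler0n.
  rewrite invr_gt0 invf_lt1; last lra. apply/andP; split; lra.
rewrite /expected_runtime.
apply: le_trans (_ : \sum_(m < n %/ L)
    expR 1 * (s_coef R L * (((m * L)%:R + 2) / 2 + L%:R)) <= _).
  apply: ler_sum => m _; exact: term_ub.
rewrite -sum_id.
have -> : expR 1 * s_coef R L * (L%:R / 4 * ((\sum_(m < n %/ L) (m%:R : R)) * 2) +
   (n %/ L)%:R * (1 + L%:R)) = \sum_(m < n %/ L)
    expR 1 * (s_coef R L * (((m * L)%:R + 2) / 2 + L%:R)).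
  have -> : ((n %/ L)%:R : R) = \sum_(m < n %/ L) 1 by rewrite sumr_const card_ord.
  rewrite [RHS](eq_bigr (fun m : 'I_(n %/ L) => expR 1 * s_coef R L * (L%:R / 4 * 2) * (m%:R : R)
     + expR 1 * s_coef R L * (1 + L%:R) * 1)); last first.
    by move=> m _; rewrite natrM; field.
  rewrite big_split /= -!mulr_sumr; ring.
by [].
Qed.


Lemma ratio_bounds (n L : nat) : (0 < n)%N -> (0 < L)%N -> (L %| n)%N ->
  1 - L%:R / n%:R <= opt_runtime R n L /
     (expR 1 / 2 * (b_coef R L * 2 ^+ L / L%:R) * n%:R ^+ 2)
  <= 1 + 8 * (L%:R / n%:R).
Proof.
move=> n0 L0 Ln.
have [N hN] : exists N, (n %/ L)%N = N by eexists.
have hn : n = (N * L)%N by rewrite -hN divnK.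
have N0 : (0 < N)%N by move: n0; rewrite hn muln_gt0 => /andP[].
have NR : (1 : R) <= N%:R by rewrite ler1n.
have LR : (1 : R) <= L%:R by rewrite ler1n.
have SL := s_gt0 L L0.
have e1 : 1 <= expR 1 :> R by rewrite -expR0 ler_expR.
set D := expR 1 / 2 * _ * _.
have hD : D = expR 1 * s_coef R L * L%:R / 4 * (N%:R * N%:R).
  rewrite /D /b_coef exprS hn natrM; field; rewrite expf_neq0 ?andbT; apply/eqP; lra.
have D0 : 0 < D.
  rewrite hD; apply: mulr_gt0; last by apply: mulr_gt0; lra.
  apply: divr_gt0; last lra.
  apply: mulr_gt0; last lra.
  apply: mulr_gt0; lra.
have hLn : (L%:R / n%:R : R) = N%:R^-1.
  rewrite hn natrM; field; apply/andP; split; apply/eqP; lra.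
set E := [set t | exists p : 'I_(n %/ L) -> R, (forall m, 0 < p m < 1) /\ t = expected_runtime p].
have hlb : lbound E (expR 1 * s_coef R L * L%:R / 4 * (N%:R * (N%:R - 1))).
  by move=> t [p [hp ->]]; rewrite -hN; exact: lower_all.
have hne : E !=set0.
  exists (expected_runtime (fun _ : 'I_(n %/ L) => 1 / 2 : R)); exists (fun _ => 1/2); split => //.
  move=> _; apply/andP; split; lra.
have hlo := lb_le_inf hne hlb.
have [p [hp hup]] := upper_one n L.
rewrite hN in hup.
have hhi : opt_runtime R n L <= expR 1 * s_coef R L *
     (L%:R / 4 * (N%:R * (N%:R - 1)) + N%:R * (1 + L%:R)).
  apply: le_trans hup; apply: (ge_inf (E := E)).
  - by exists (expR 1 * s_coef R L * L%:R / 4 * (N%:R * (N%:R - 1))).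
  - by exists p.
apply/andP; split.
  rewrite ler_pdivlMr //; apply: le_trans _ hlo.
  rewrite hLn hD le_eqVlt; apply/orP; left; apply/eqP; field; by rewrite pnatr_eq0 -lt0n.
rewrite ler_pdivrMr //; apply: le_trans hhi _.
have -> : (1 + 8 * (L%:R / n%:R)) * D = expR 1 * s_coef R L *
     (L%:R / 4 * (N%:R * (N%:R - 1)) + N%:R * (1 + L%:R)) +
     expR 1 * s_coef R L * N%:R * (5 / 4 * L%:R - 1).
  rewrite hLn hD; field; by rewrite pnatr_eq0 -lt0n.
rewrite lerDl; clear -NR LR SL e1.
apply: mulr_ge0; last lra.
apply: mulr_ge0; last lra.
apply: mulr_ge0; lra.
Qed.

End Aux.

Theorem mainTheorem10 (R : realType) (l : nat -> nat) :
  (forall n : nat, (0 < l n)%N) ->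
  (forall n : nat, (l n %| n)%N) ->
  ((fun n : nat => ((l n)%:R / n%:R : R)) @ \oo --> (0 : R)) ->
  ((fun n : nat => (opt_runtime R n (l n) /
     (expR 1 / 2 * (b_coef R (l n) * 2 ^+ l n / (l n)%:R) * n%:R ^+ 2) : R))
    @ \oo --> (1 : R)).
Proof.
move=> l0 ldiv hl.
apply: (@squeeze_cvgr _ _ _ _ (fun n => 1 - (l n)%:R / n%:R)
          (fun n => 1 + 8 * ((l n)%:R / n%:R))).
- exists 1%N => // n /= n1; exact: ratio_bounds.
- rewrite -[X in _ --> X](subr0 (1 : R)); apply: cvgB => //; exact: cvg_cst.
- rewrite -[X in _ --> X](addr0 (1 : R)); apply: cvgD; first exact: cvg_cst.
  rewrite -(mulr0 (8 : R)); apply: cvgM => //; exact: cvg_cst.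
Qed.
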